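(* Let $m,k\in\mathbb{N}$ and let $\beta\in\mathbb{C}$ with $\beta,\ 2\beta+2m+2k+1\notin\mathbb{Z}_0^-$. Then \[ {}_3F_2\left[\begin{array}{r} -2m,\ 1+2m,\ \beta;\\ -2m-2k,\ 2\beta+2m+2k+1;\end{array}1\right]_{2m}=\frac{(1+2\beta+2k)_{2m}\left(1+k\right)_{2m}}{(1+2k)_{2m}\left(1+\beta+k\right)_{2m}}. \]
   Context: $\mathbb{N}=\{1,2,3,\dots\}$, $\mathbb{Z}_0^-=\{0,-1,-2,\dots\}$. For $a\in\mathbb{C}$ and $n\in\mathbb{N}_0$, $(a)_0=1$ and $(a)_n=a(a+1)\cdots(a+n-1)$. For $N\in\mathbb{N}_0$, ${}_3F_2\left[\begin{array}{r} a_1,a_2,a_3;\\ b_1,b_2;\end{array}z\right]_N=\sum_{n=0}^{N}\frac{(a_1)_n(a_2)_n(a_3)_n}{(b_1)_n(b_2)_n}\frac{z^n}{n!}$ (the sum of the first $N+1$ terms), defined whenever $(b_1)_n(b_2)_n\neq0$ for $0\le n\le N$. *)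

(* Defs.v *)
From HB Require Import structures.
From mathcomp Require Import all_boot all_order all_algebra.
From mathcomp Require Import complex.
From mathcomp Require Import reals.
Set Implicit Arguments. Unset Strict Implicit. Unset Printing Implicit Defensive.
Import Order.TTheory GRing.Theory Num.Theory.
Local Open Scope ring_scope.

Definition poch {F : comRingType} (a : F) (n : nat) : F :=
  \prod_(i < n) (a + i%:R).

Definition F32trunc {F : fieldType} (a1 a2 a3 b1 b2 z : F) (N : nat) : F :=
  \sum_(n < N.+1)
    (poch a1 n * poch a2 n * poch a3 n) / (poch b1 n * poch b2 n)
      * (z ^+ n / (n`!)%:R).

Definition in_Z0minus {F : ringType} (x : F) : Prop := exists n : nat, x = - n%:R.

(* Main.v *)
Require Import Defs.
From HB Require Import structures.
From mathcomp Require Import all_boot all_order all_algebra.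
From mathcomp Require Import complex.
From mathcomp Require Import reals.
From mathcomp Require Import ring lra.
Import Order.TTheory GRing.Theory Num.Theory.
Set Implicit Arguments. Unset Strict Implicit. Unset Printing Implicit Defensive.
Local Open Scope ring_scope.

Lemma pochS (F : comRingType) (a : F) n : poch a n.+1 = poch a n * (a + n%:R).
Proof. by rewrite /poch big_ord_recr. Qed.

Lemma poch0 (F : comRingType) (a : F) : poch a 0 = 1.
Proof. by rewrite /poch big_ord0. Qed.

Lemma pochSl (F : comRingType) (a : F) n : poch a n.+1 = a * poch (a + 1) n.
Proof.
rewrite /poch big_ord_recl addr0; congr (_ * _); apply: eq_bigr => i _.
by rewrite lift0 -addn1 natrD addrA [_ + 1]addrC addrA [1 + a]addrC.
Qed.

Lemma poch2 (F : comRingType) (a c : F) n : c = a + 2 ->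
  poch c n * (a * (a + 1)) = poch a n * ((a + n%:R) * (a + n%:R + 1)).
Proof.
move=> ->.
have h1 : poch a n.+2 = poch a n * ((a + n%:R) * (a + n%:R + 1)).
  by rewrite !pochS mulrA -addn1 natrD addrA.
have h2 : poch a n.+2 = poch (a + 2) n * (a * (a + 1)).
  rewrite pochSl pochSl mulrA mulrC -addrA.
  by rewrite (_ : (1 + 1 : F) = 2).
by rewrite -h1 -h2.
Qed.

Lemma poch_eq0 (F : comRingType) (j n : nat) : (j < n)%N -> poch (- (j%:R) : F) n = 0.
Proof.
move=> hj; rewrite /poch (bigD1 (Ordinal hj)) //= addNr mul0r //.
Qed.

Lemma poch_neq0 (F : idomainType) (a : F) n :
  (forall i, (i < n)%N -> a + i%:R != 0) -> poch a n != 0.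
Proof.
move=> h; rewrite /poch; apply/prodf_neq0 => i _; exact: h.
Qed.

Definition tm (F : fieldType) (a1 a2 a3 b1 b2 : F) (n : nat) : F :=
  (poch a1 n * poch a2 n * poch a3 n) / (poch b1 n * poch b2 n)
      * (1 ^+ n / (n`!)%:R).

Lemma F32_tm (F : fieldType) (a1 a2 a3 b1 b2 : F) N :
  F32trunc a1 a2 a3 b1 b2 1 N = \sum_(n < N.+1) tm a1 a2 a3 b1 b2 n.
Proof. by []. Qed.

Lemma fact_neq0 (F : numFieldType) n : (n`!)%:R != 0 :> F.
Proof. by rewrite pnatr_eq0 -lt0n fact_gt0. Qed.

Lemma tmS (F : numFieldType) (a1 a2 a3 b1 b2 : F) n :
  poch b1 n != 0 -> poch b2 n != 0 -> b1 + n%:R != 0 -> b2 + n%:R != 0 ->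
  tm a1 a2 a3 b1 b2 n.+1 = tm a1 a2 a3 b1 b2 n *
    ((a1 + n%:R) * (a2 + n%:R) * (a3 + n%:R) / ((b1 + n%:R) * (b2 + n%:R) * (n%:R + 1))).
Proof.
move=> h1 h2 h3 h4.
have hf := fact_neq0 F n.
have hn : n%:R + 1 != 0 :> F by rewrite -[1]/(1%:R) -natrD pnatr_eq0 addn1.
rewrite /tm !pochS factS natrM !expr1n -addn1 natrD.
field.
by rewrite h1 h2 h3 h4 hf hn.
Qed.

Definition lamE (F : fieldType) (M K b : F) : F :=
  ((1+2*b+2*K+2*M)*(2+2*b+2*K+2*M)*(1+K+2*M)*(2+K+2*M))
  / ((1+2*K+2*M)*(2+2*K+2*M)*(1+b+K+2*M)*(2+b+K+2*M)).

Definition hE (F : fieldType) (M K b x : F) : F :=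
  let e := -2*M-2*K in let f := 2*b+2*M+2*K+1 in
  let D := (b+2*M+K+1)*(b+2*M+K+2) in
  let A := 2*((6*M+5)*(M+1)+(4*M+3)*K) in
  let B := (8*M+6)*K^+2 + 2*(12*M^+2+18*M+7)*K + 2*(M+1)*(2*M+1)*(4*M+3) in
  x*(x+f+1)*(-(b+4*M+2*K+3)*x^+2 + (4*M+3)*(1-b)*x + A*b + B)
   / (D*(x+2*M+1)*(x+2*M+2)*(x+e-2)).

Ltac nzt := repeat (apply/andP; split); try assumption; lra.

Lemma step_pt (F : realFieldType) (M K b : F) (n : nat) :
  0 <= M -> 1 <= K -> 0 < b -> n%:R <= 2*M+2 ->
  let t1 j := tm (-(2*M+2)) (1+(2*M+2)) b (-(2*M+2) - 2*K) (2*b+(2*M+2)+2*K+1) j in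
  let t0 j := tm (-(2*M)) (1+2*M) b (-(2*M)-2*K) (2*b+2*M+2*K+1) j in
  t1 n - lamE M K b * t0 n = t1 n.+1 * hE M K b (n.+1%:R) - t1 n * hE M K b n%:R.
Proof.
move=> hM hK hb hn t1 t0.
have hx : 0 <= (n%:R : F) by rewrite ler0n.
have hi : forall i, (i < n)%N -> 0 <= (i%:R : F) /\ (i%:R : F) <= 2*M+1.
  move=> i hi; split; first by rewrite ler0n.
  have : (i.+1%:R : F) <= n%:R by rewrite ler_nat.
  rewrite -addn1 natrD; lra.
have nE2 : poch (-(2*M+2) - 2*K) n != 0.
  apply: poch_neq0 => i /hi [h1 h2]; lra.
have nF2 : poch (2*b+(2*M+2)+2*K+1) n != 0.
  apply: poch_neq0 => i /hi [h1 h2]; lra.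
have hf := fact_neq0 F n.
rewrite /t1 tmS //; try lra.
rewrite -/(t1 n).
have -> : t0 n = t1 n *
  ((-(2*M+2)-2*K)*(-(2*M+2)-2*K+1)*(n%:R-2*M-2)*(n%:R-2*M-1)*(n%:R+(2*b+2*M+2*K+1))*(n%:R+(2*b+2*M+2*K+1)+1)
   / ((2*b+2*M+2*K+1)*(2*b+2*M+2*K+1+1)*(n%:R+2*M+1)*(n%:R+2*M+2)*(n%:R+(-(2*M+2)-2*K))*(n%:R+(-(2*M+2)-2*K)+1))).
  have E1 := @poch2 F (-(2*M+2)) (-(2*M)) n ltac:(ring).
  have E2 := @poch2 F (1+2*M) (1+(2*M+2)) n ltac:(ring).
  have E3 := @poch2 F (-(2*M+2) - 2*K) (-(2*M)-2*K) n ltac:(ring).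
  have E4 := @poch2 F (2*b+2*M+2*K+1) (2*b+(2*M+2)+2*K+1) n ltac:(ring).
  have eP : poch (-(2*M)) n = poch (-(2*M+2)) n * ((-(2*M+2) + n%:R) * (-(2*M+2) + n%:R + 1))
      / (-(2*M+2) * (-(2*M+2) + 1)).
    rewrite -E1; field; nzt.
  have eQ : poch (1+2*M) n = poch (1+(2*M+2)) n * ((1+2*M) * (1+2*M+1))
      / ((1+2*M + n%:R) * (1+2*M + n%:R + 1)).
    rewrite E2; field; nzt.
  have eE : poch (-(2*M)-2*K) n = poch (-(2*M+2) - 2*K) n * ((-(2*M+2) - 2*K + n%:R) * (-(2*M+2) - 2*K + n%:R + 1))
      / ((-(2*M+2) - 2*K) * (-(2*M+2) - 2*K + 1)).
    rewrite -E3; field; nzt.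
  have eF : poch (2*b+2*M+2*K+1) n = poch (2*b+(2*M+2)+2*K+1) n * ((2*b+2*M+2*K+1) * (2*b+2*M+2*K+1+1))
      / ((2*b+2*M+2*K+1 + n%:R) * (2*b+2*M+2*K+1 + n%:R + 1)).
    rewrite E4; field; nzt.
  rewrite /t0 /t1 /tm eP eQ eE eF.
  field; nzt.
rewrite /lamE /hE -addn1 natrD.
field; nzt.
Qed.

Definition Tm (F : fieldType) (k m : nat) (b : F) (n : nat) : F :=
  tm (-(2* m)%:R) (1 + (2* m)%:R) b (-(2* m)%:R - (2*k)%:R) (2*b + (2* m)%:R + (2*k)%:R + 1) n.

Definition rhsE (F : fieldType) (k m : nat) (b : F) : F :=
  (poch (1 + 2 * b + (2 * k)%:R) (2 * m) * poch (1 + k%:R) (2 * m))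
    / (poch (1 + (2 * k)%:R) (2 * m) * poch (1 + b + k%:R) (2 * m)).


Lemma core (F : realFieldType) (k : nat) (b : F) : (0 < k)%N -> 0 < b ->
  forall m, \sum_(n < (2* m).+1) Tm k m b n = rhsE k m b.
Proof.
move=> hk hb; elim => [|m IH].
  rewrite big_ord1 /Tm /tm /rhsE !poch0 /= expr0 mulr1 !mul1r !invr1 mulr1.
  done.
set M : F := m%:R; set K : F := k%:R.
have hM : 0 <= M by rewrite ler0n.
have hK : 1 <= K by rewrite ler1n.
have cm : (2* m)%:R = 2*M :> F by rewrite natrM.
have cm1 : (2* m.+1)%:R = 2*M+2 :> F by rewrite mulnS natrD natrM addrC.
have ck : (2*k)%:R = 2*K :> F by rewrite natrM.
pose lam := lamE M K b.
pose H j := Tm k m.+1 b j * hE M K b j%:R.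
have tel : \sum_(n < (2* m).+3) (Tm k m.+1 b n - lam * Tm k m b n) = H (2* m).+3 - H 0%N.
  rewrite -(big_mkord xpredT (fun n => Tm k m.+1 b n - lam * Tm k m b n)).
  apply: telescope_sumr_eq => // n /andP[_ hn].
  rewrite /H /Tm cm cm1 ck.
  apply: step_pt => //.
  have : (n%:R : F) <= (2* m).+2%:R by rewrite ler_nat.
  by rewrite -addn2 natrD cm.
have H0 : H 0%N = 0 by rewrite /H /hE mulr0n !mul0r mulr0.
have HN : H (2* m).+3 = 0.
  rewrite /H /Tm /tm poch_eq0 ?mul0r //.
  by rewrite mulnS.
rewrite H0 HN subr0 sumrB -mulr_sumr in tel.
move/eqP: tel; rewrite subr_eq0 => /eqP tel.
have -> : (2* m.+1).+1 = (2* m).+3 by rewrite mulnS.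
rewrite tel.
have -> : \sum_(n < (2* m).+3) Tm k m b n = \sum_(n < (2* m).+1) Tm k m b n.
  rewrite big_ord_recr big_ord_recr /=.
  rewrite /Tm /tm !(@poch_eq0 _ (2* m)) // !mul0r !addr0.
  done.
rewrite IH /rhsE /lam /lamE.
have -> : (2* m.+1 = (2* m).+2)%N by rewrite mulnS.
have cm2 : ((2* m).+1)%:R = 2*M + 1 :> F by rewrite -addn1 natrD cm.
rewrite !pochS cm2 cm ck -/K.
have n1 : poch (1 + 2*K) (2* m) != 0.
  apply: poch_neq0 => i _; have := ler0n F i; lra.
have n2 : poch (1 + b + K) (2* m) != 0.
  apply: poch_neq0 => i _; have := ler0n F i; lra.
field; nzt.
Qed.

Lemma horner_poch (F : fieldType) (a : {poly F}) x n : (poch a n).[x] = poch a.[x] n.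
Proof.
rewrite /poch horner_prod; apply: eq_bigr => i _.
by rewrite hornerD hornerMn hornerC.
Qed.

Lemma poch_split (F : comRingType) (a : F) n p :
  poch a (n + p) = poch a n * poch (a + n%:R) p.
Proof.
elim: p => [|p IH]; first by rewrite addn0 poch0 mulr1.
by rewrite addnS !pochS IH natrD addrA mulrA.
Qed.

Lemma extend (F : numFieldType) (k m : nat)
  (good : forall j : nat, \sum_(n < (2 * m).+1) Tm k m (j.+1%:R : F) n = rhsE k m j.+1%:R)
  (nz1 : forall j : nat, poch (2 * (j.+1%:R : F) + (2 * m)%:R + (2 * k)%:R + 1) (2 * m) != 0)
  (nz2 : forall j : nat, poch (1 + (j.+1%:R : F) + k%:R) (2 * m) != 0)
  (x0 : F) :
  poch (2 * x0 + (2 * m)%:R + (2 * k)%:R + 1) (2 * m) != 0 ->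
  poch (1 + x0 + k%:R) (2 * m) != 0 ->
  \sum_(n < (2 * m).+1) Tm k m x0 n = rhsE k m x0.
Proof.
pose fP : {poly F} := 2 * 'X + (2 * m)%:R%:P + (2 * k)%:R%:P + 1.
pose cn n : F := poch (-(2 * m)%:R) n * poch (1 + (2 * m)%:R) n *
   (poch (-(2 * m)%:R - (2 * k)%:R) n)^-1 * (1 ^+ n / (n`!)%:R).
pose Pl : {poly F} := \sum_(n < (2 * m).+1) (cn n)%:P * poch 'X n *
   poch (fP + n%:R%:P) (2 * m - n) * poch (1 + 'X + k%:R%:P) (2 * m).
pose Pr : {poly F} := poch (1 + 2 * 'X + (2 * k)%:R%:P) (2 * m) *
   (poch (1 + k%:R) (2 * m) / poch (1 + (2 * k)%:R) (2 * m))%:P * poch fP (2 * m).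
have fPE : forall x, fP.[x] = 2 * x + (2 * m)%:R + (2 * k)%:R + 1.
  by move=> x; rewrite /fP !hornerE; ring.
have evalL : forall x, poch (2 * x + (2 * m)%:R + (2 * k)%:R + 1) (2 * m) != 0 ->
    Pl.[x] = (\sum_(n < (2 * m).+1) Tm k m x n) *
       poch (2 * x + (2 * m)%:R + (2 * k)%:R + 1) (2 * m) * poch (1 + x + k%:R) (2 * m).
  move=> x hx.
  rewrite /Pl horner_sum mulr_suml mulr_suml; apply: eq_bigr => [[n hn]] _ /=.
  rewrite !hornerM hornerC !horner_poch hornerD hornerC fPE hornerD hornerD hornerX hornerC.
  have hn' : (n <= 2 * m)%N by [].
  have sp := poch_split (2 * x + (2 * m)%:R + (2 * k)%:R + 1) n (2 * m - n).
  rewrite subnKC // in sp.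
  have hq : poch (2 * x + (2 * m)%:R + (2 * k)%:R + 1) n != 0.
    by apply: contraNneq hx; rewrite sp => ->; rewrite mul0r.
  rewrite sp /Tm /tm /cn invfM hornerC.
  move: (poch (-(2 * m)%:R - (2 * k)%:R) n)^-1 => q.
  have hf := fact_neq0 F n.
  field.
  by rewrite hq hf.
have evalR : forall x, poch (1 + x + k%:R) (2 * m) != 0 ->
    Pr.[x] = rhsE k m x *
       poch (2 * x + (2 * m)%:R + (2 * k)%:R + 1) (2 * m) * poch (1 + x + k%:R) (2 * m).
  move=> x hx.
  rewrite /Pr !hornerM hornerC !horner_poch fPE /rhsE !hornerD hornerC hornerM hornerX hornerC.
  rewrite invfM.
  move: (poch (1 + (2 * k)%:R) (2 * m))^-1 => q.
  have h2 : (2 : {poly F}).[x] = 2 by rewrite -polyC_natr hornerC.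
  rewrite h2.
  field.
  by rewrite hx.
have PlPr : Pl = Pr.
  apply/eqP; rewrite -subr_eq0; apply/negPn/negP => hp.
  set p := Pl - Pr in hp.
  have hall : all (root p) [seq (j.+1)%:R | j <- iota 0 (size p)].
    apply/allP => y /mapP [j _ ->].
    by rewrite /root /p hornerD hornerN evalL // evalR // good subrr.
  have hu : uniq [seq (j.+1)%:R : F | j <- iota 0 (size p)].
    have inj : injective (fun j : nat => (j.+1%:R : F)).
      by move=> a b /eqP; rewrite eqr_nat => /eqP [].
    by rewrite (map_inj_uniq inj) iota_uniq.
  have := max_poly_roots hp hall hu.
  by rewrite size_map size_iota ltnn.
move=> h1 h2.
apply: (mulIf h1); apply: (mulIf h2).
by rewrite -evalL // -evalR // PlPr.
Qed.

Lemma phi_poch (F G : fieldType) (f : {rmorphism F -> G}) (a : F) n :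
  f (poch a n) = poch (f a) n.
Proof.
rewrite rmorph_prod; apply: eq_bigr => i _; by rewrite rmorphD rmorph_nat.
Qed.

Lemma phi_tm (F G : fieldType) (f : {rmorphism F -> G}) (a1 a2 a3 b1 b2 : F) n :
  f (tm a1 a2 a3 b1 b2 n) = tm (f a1) (f a2) (f a3) (f b1) (f b2) n.
Proof.
by rewrite /tm !rmorphM !fmorphV !rmorphM !phi_poch rmorphXn rmorph1 rmorph_nat.
Qed.

Lemma phi_Tm (F G : fieldType) (f : {rmorphism F -> G}) k m (b : F) n :
  f (Tm k m b n) = Tm k m (f b) n.
Proof.
rewrite /Tm phi_tm; congr tm;
  by rewrite ?rmorphB ?rmorphN ?rmorphD ?rmorphM ?rmorph_nat ?rmorph1.
Qed.

Lemma phi_rhs (F G : fieldType) (f : {rmorphism F -> G}) k m (b : F) :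
  f (rhsE k m b) = rhsE k m (f b).
Proof.
rewrite /rhsE !rmorphM !fmorphV !rmorphM !phi_poch;
  by rewrite ?rmorphB ?rmorphN ?rmorphD ?rmorphM ?rmorph_nat ?rmorph1.
Qed.

Unset Implicit Arguments.

Theorem mainTheorem6 (R : realType) (m k : nat) (beta : R[i])
  (hm : (0 < m)%N) (hk : (0 < k)%N)
  (hbeta : ~ in_Z0minus beta)
  (hb2 : ~ in_Z0minus (2 * beta + (2 * m)%:R + (2 * k)%:R + 1)) :
  F32trunc (- (2 * m)%:R) (1 + (2 * m)%:R) beta
           (- (2 * m)%:R - (2 * k)%:R) (2 * beta + (2 * m)%:R + (2 * k)%:R + 1)
           1 (2 * m)
  = (poch (1 + 2 * beta + (2 * k)%:R) (2 * m) * poch (1 + k%:R) (2 * m))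
    / (poch (1 + (2 * k)%:R) (2 * m) * poch (1 + beta + k%:R) (2 * m)).
Proof.
have good : forall j : nat, \sum_(n < (2 * m).+1) Tm k m (j.+1%:R : R[i]) n
                             = rhsE k m j.+1%:R.
  move=> j.
  have := @core R k j.+1%:R hk (ltr0Sn _ _) m.
  move/(congr1 (real_complex R)).
  by rewrite rmorph_sum phi_rhs rmorph_nat; under eq_bigr do rewrite phi_Tm rmorph_nat.
have nz1 : forall j : nat,
    poch (2 * (j.+1%:R : R[i]) + (2 * m)%:R + (2 * k)%:R + 1) (2 * m) != 0.
  move=> j.
  have hR : poch (2 * (j.+1%:R : R) + (2 * m)%:R + (2 * k)%:R + 1) (2 * m) != 0.
    apply: poch_neq0 => i _.
    have := ler0n R i; have := ler0n R (2 * m); have := ler0n R (2 * k);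
      have := ler0n R j.+1; lra.
  move: hR; rewrite -(fmorph_eq0 (real_complex R)) phi_poch.
  by rewrite !rmorphD !rmorphM !rmorph_nat rmorph1.
have nz2 : forall j : nat, poch (1 + (j.+1%:R : R[i]) + k%:R) (2 * m) != 0.
  move=> j.
  have hR : poch (1 + (j.+1%:R : R) + k%:R) (2 * m) != 0.
    apply: poch_neq0 => i _.
    have := ler0n R i; have := ler0n R k; have := ler0n R j.+1; lra.
  move: hR; rewrite -(fmorph_eq0 (real_complex R)) phi_poch.
  by rewrite !rmorphD !rmorph_nat rmorph1.
have h1 : poch (2 * beta + (2 * m)%:R + (2 * k)%:R + 1) (2 * m) != 0.
  apply: poch_neq0 => i _; apply/eqP => h; apply: hb2; exists i.
  by apply/eqP; rewrite -addr_eq0 h.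
have h2 : poch (1 + beta + k%:R) (2 * m) != 0.
  apply: poch_neq0 => i _; apply/eqP => h; apply: hbeta; exists (1 + k + i)%N.
  apply/eqP; rewrite -addr_eq0; apply/eqP.
  rewrite !natrD mulr1n; transitivity (1 + beta + k%:R + i%:R); first ring.
  exact: h.
exact: (extend good nz1 nz2 h1 h2).
Qed.
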